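(* As formal power series in $z,q$, $$\sum_{n\geq 1}\sum_{j\geq 0}FD_{j,2}(n)z^jq^n=\frac{q(1-(1-z)q)}{1-2q+(1-z)q^3}=\sum_{n\geq 1}\sum_{j\geq 0}FO_{j,2}(n)z^jq^n .$$
   Context: A partition is a finite nonincreasing sequence of positive integers (its parts); its size is not fixed. The perimeter of a partition with largest part $\alpha$ and $\lambda$ parts is $\alpha+\lambda-1$. $FO_{j,2}(n)$ is the number of partitions of perimeter $n$ having exactly $j$ distinct even part sizes; $FD_{j,2}(n)$ is the number of partitions of perimeter $n$ having exactly $j$ distinct part sizes that each appear at least $2$ times. *)

(* Defs.v *)
From mathcomp Require Import all_boot all_order all_algebra.
Set Implicit Arguments. Unset Strict Implicit. Unset Printing Implicit Defensive.
Import GRing.Theory Num.Theory.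

Definition is_partition (s : seq nat) : bool :=
  sorted geq s && all (fun x => 0 < x) s.

Definition largest_part (s : seq nat) : nat := foldr maxn 0 s.

Definition perimeter (s : seq nat) : nat := (largest_part s + size s).-1.

Definition n_distinct_even (s : seq nat) : nat :=
  count (fun x => ~~ odd x) (undup s).

Definition n_distinct_rep2 (s : seq nat) : nat :=
  count (fun x => 1 < count_mem x s) (undup s).

Fixpoint seqs_upto (b l : nat) : seq (seq nat) :=
  match l with
  | 0 => [:: [::]]
  | l'.+1 => [::] :: [seq x :: t | x <- iota 0 b, t <- seqs_upto b l']
  end.

(* For n >= 1, every partition of perimeter n has parts <= n and at most n
   parts, hence occurs (exactly once) in seqs_upto n.+1 n. *)
Definition partitions_perim (n : nat) : seq (seq nat) :=
  [seq s <- seqs_upto n.+1 n | is_partition s && (perimeter s == n)].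

Definition FO2 (j n : nat) : nat :=
  count (fun s => n_distinct_even s == j) (partitions_perim n).
Definition FD2 (j n : nat) : nat :=
  count (fun s => n_distinct_rep2 s == j) (partitions_perim n).

Local Open Scope ring_scope.

(* coefficient of z^i q^k in 1 - 2q + (1-z) q^3 *)
Definition denom_coef (k i : nat) : int :=
  match k, i with
  | 0, 0 => 1 | 1, 0 => -2 | 3, 0 => 1 | 3, 1 => -1 | _, _ => 0 end.

(* coefficient of z^j q^n in q (1 - (1-z) q) = q - q^2 + z q^2 *)
Definition numer_coef (n j : nat) : int :=
  match n, j with
  | 1, 0 => 1 | 2, 0 => -1 | 2, 1 => 1 | _, _ => 0 end.

(* The formal power series sum_{n,j} a n j z^j q^n equals
   q(1-(1-z)q)/(1-2q+(1-z)q^3), i.e. (since the denominator is invertible)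
   series * denominator = numerator, coefficientwise. *)
Definition gf_identity (a : nat -> nat -> int) : Prop :=
  forall n j : nat,
    \sum_(k < n.+1) \sum_(i < j.+1) denom_coef k i * a (n - k)%N (j - i)%N
    = numer_coef n j.

(* coefficient array of sum_{n>=1} sum_{j>=0} F j n z^j q^n *)
Definition coef_array (F : nat -> nat -> nat) : nat -> nat -> int :=
  fun n j => if n is 0 then 0 else (F j n)%:Z.

(* Main.v *)
Require Import Defs.
From mathcomp Require Import all_boot all_order all_algebra.
From mathcomp Require Import zify ring.
Set Implicit Arguments. Unset Strict Implicit. Unset Printing Implicit Defensive.

Lemma mem_seqs_upto b l s :
  (s \in seqs_upto b l) = (size s <= l) && all (fun x => x < b) s.
Proof.
elim: l s => [|l IH] s /=.
  by case: s.
rewrite in_cons; case: s => [|x t] //=.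
apply/allpairsP/idP.
  case=> [[y u]] /= [Hy Hu [-> ->]].
  by move: Hy; rewrite mem_iota /= => ->; move: Hu; rewrite IH ltnS.
move=> /andP [Hs /andP [Hx Ht]]; exists (x, t) => /=; split => //.
  by rewrite mem_iota.
by rewrite IH Ht -ltnS Hs.
Qed.

Lemma uniq_seqs_upto b l : uniq (seqs_upto b l).
Proof.
elim: l => [|l IH] //=.
apply/andP; split.
  by apply/allpairsP => -[[y u]] [_ _].
apply: allpairs_uniq => //; first exact: iota_uniq.
by move=> [x1 t1] [x2 t2] _ _ /= [-> ->].
Qed.

Lemma part_cons x t :
  is_partition (x :: t) = [&& 0 < x, head x t <= x & is_partition t].
Proof.
rewrite /is_partition /=; case: t => [|y t] /=; first by rewrite leqnn !andbT.
by rewrite andbA andbAC -!andbA; do !bool_congr.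
Qed.

Lemma part_all x t : is_partition (x :: t) -> all (fun y => y <= x) t.
Proof.
move=> /andP [/= Hp _]; have := order_path_min (fun y x z (h1 : geq x y) (h2 : geq y z) => leq_trans h2 h1) Hp.
by [].
Qed.

Lemma foldr_max_le x t : all (fun y => y <= x) t -> foldr maxn 0 t <= x.
Proof. by elim: t => //= y t IH /andP [Hy Ht]; rewrite geq_max Hy IH. Qed.

Lemma perim_cons x t : is_partition (x :: t) -> perimeter (x :: t) = x + size t.
Proof.
move=> H; rewrite /perimeter /largest_part /= (maxn_idPl (foldr_max_le (part_all H))).
by rewrite addnS.
Qed.

Definition m1 (s : seq nat) : bool := if s is x :: t then x \notin t else false.
Definition incr1 (s : seq nat) : seq nat := if s is x :: t then x.+1 :: t else [::].
Definition f2 (t : seq nat) : seq nat := (head 0 t).+1 :: t.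
Definition f3 (t : seq nat) : seq nat := head 0 t :: t.

Fixpoint gen (n : nat) : seq (seq nat) :=
  match n with
  | 0 => [::]
  | m.+1 =>
    let gm := gen m in
    let gmm := (match m with 0 => [::] | k.+1 => gen k end) in
    (if m is 0 then [:: [:: 1]] else [::]) ++
    map incr1 (filter m1 gm) ++ map f2 gmm ++ map f3 gm
  end.

Lemma gen_predn m : (match m with 0 => [::] | k.+1 => gen k end) = gen m.-1.
Proof. by case: m. Qed.

Lemma genS m : gen m.+1 = (if m is 0 then [:: [:: 1]] else [::]) ++
    map incr1 (filter m1 (gen m)) ++ map f2 (gen m.-1) ++ map f3 (gen m).
Proof. by rewrite /= gen_predn. Qed.

Definition good n s := [&& is_partition s, perimeter s == n & s != [::]].

Lemma gen_sound n s : s \in gen n -> good n s.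
Proof.
elim/ltn_ind: n s => [[|m]] // IH s.
rewrite genS !mem_cat => /or4P [].
- case: m {IH} => //; rewrite inE => /eqP ->; by [].
- move=> /mapP [[|x t]]; rewrite ?mem_filter //= => /andP [Hx Hm] ->.
  move: (IH m (ltnSn m) _ Hm) => /and3P [Hp /eqP Hper _].
  have Hp' : is_partition (x.+1 :: t).
    by move: Hp; rewrite !part_cons => /and3P [x0 Hh Ht]; rewrite Ht andbT; case: (t) Hh => //= y _ /leqW.
  rewrite /good Hp' /= perim_cons //.
  by move: Hper; rewrite perim_cons // => <-; rewrite addSn eqxx.
- have Hlt : m.-1 < m.+1 by lia.
  move=> /mapP [[|y t]].
    by move=> /(IH _ Hlt); rewrite /good /= andbF.
  move=> Hm ->.
  move: (IH _ Hlt _ Hm) => /and3P [Hp /eqP Hper _].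
  have Hp' : is_partition (f2 (y :: t)) by rewrite /f2 /= part_cons /= leqnSn Hp.
  rewrite /good Hp' /= perim_cons //=.
  move: Hper; rewrite perim_cons //; move: Hp; rewrite part_cons => /andP [y0 _]; lia.
- move=> /mapP [[|y t]] //.
    by move=> /(IH m (ltnSn m)); rewrite /good /= andbF.
  move=> Hm ->.
  move: (IH m (ltnSn m) _ Hm) => /and3P [Hp /eqP Hper _].
  have Hp' : is_partition (f3 (y :: t)).
    have y0 : 0 < y by move: Hp; rewrite part_cons => /and3P [].
    by rewrite /f3 /= part_cons /= leqnn Hp y0.
  rewrite /good Hp' /= perim_cons //=.
  by move: Hper; rewrite perim_cons // => <-; rewrite addnS eqxx.
Qed.

Lemma gen_complete n s : good n s -> s \in gen n.
Proof.
elim/ltn_ind: n s => n IH [|x t] /and3P [Hp /eqP Hper _] //.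
have x0 : 0 < x by move: Hp; rewrite part_cons => /and3P [].
rewrite perim_cons // in Hper.
case: n IH Hper => [|m] IH Hper; first by lia.
rewrite genS !mem_cat; apply/or4P.
case: t Hp Hper => [|y t] Hp Hper.
  case: m IH Hper => [|m'] IH Hper.
    by apply: Or41; rewrite /= addn0 in Hper; rewrite Hper inE.
  apply: Or42; apply/mapP; exists [:: m'.+1]; last by rewrite /= addn0 in Hper; rewrite Hper.
  rewrite mem_filter; apply/andP; split => //; apply: IH => //.
  have Hq : is_partition [:: m'.+1] by [].
  by rewrite /good Hq perim_cons //= addn0 eqxx.
move: (Hp); rewrite part_cons /= => /and3P [_ Hyx Hpt].
have y0 : 0 < y by move: Hpt; rewrite part_cons => /and3P [].
have Hall := part_all Hpt.
rewrite /= in Hper.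
have [Exy|Nxy] := eqVneq x y.
  apply: Or44; apply/mapP; exists (y :: t); last by rewrite Exy.
  apply: IH => //; rewrite /good Hpt /= perim_cons //; apply/eqP; lia.
have [Exy1|Nxy1] := eqVneq x y.+1.
  apply: Or43; apply/mapP; exists (y :: t); last by rewrite Exy1.
  apply: IH; first by lia.
  rewrite /good Hpt /= perim_cons //; apply/eqP; lia.
case: x x0 Hyx Nxy Nxy1 Hp Hper => [|x'] // _ Hyx Nxy Nxy1 Hp Hper.
apply: Or42; apply/mapP; exists (x' :: y :: t) => //.
have Hyx' : y < x' by lia.
have Hp' : is_partition [:: x', y & t] by rewrite part_cons /= Hpt (ltnW Hyx') andbT; lia.
rewrite mem_filter /= inE negb_or; apply/andP; split.
  apply/andP; split; first by rewrite neq_ltn Hyx' orbT.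
  apply/negP => Hin; have := allP Hall _ Hin; lia.
apply: IH => //; rewrite /good Hp' /= perim_cons //=; apply/eqP; lia.
Qed.

Definition gap (s : seq nat) : nat := if s is x :: t then x - head 0 t else 0.

Lemma disj_pred (T : eqType) (P : pred T) (s1 s2 : seq T) :
  all P s1 -> all (predC P) s2 -> ~~ has (mem s1) s2.
Proof.
move=> H1 H2; apply/hasPn => x Hx; apply/negP => Hx1.
by have := allP H1 x Hx1; have := allP H2 x Hx => /= /negbTE ->.
Qed.

Lemma incr1_inj : injective incr1.
Proof. by move=> [|x s] [|y t] //= [-> ->]. Qed.
Lemma f2_inj : injective f2.
Proof. by move=> s t [_ ->]. Qed.
Lemma f3_inj : injective f3.
Proof. by move=> s t [_ ->]. Qed.

Lemma head_lt x t : is_partition (x :: t) -> x \notin t -> head 0 t < x.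
Proof.
case: t => [|y t] Hp; first by move: Hp; rewrite part_cons => /and3P [].
rewrite inE negb_or => /andP [Hxy _].
move: Hp; rewrite part_cons /= => /and3P [_ Hyx _].
by rewrite ltn_neqAle eq_sym Hxy Hyx.
Qed.

Lemma gen_uniq n : uniq (gen n).
Proof.
elim/ltn_ind: n => [[|m]] // IH.
rewrite genS.
have U1 : uniq (map incr1 (filter m1 (gen m))).
  by rewrite (map_inj_uniq incr1_inj) filter_uniq // IH.
have U2 : uniq (map f2 (gen m.-1)) by rewrite (map_inj_uniq f2_inj) IH //; lia.
have U3 : uniq (map f3 (gen m)) by rewrite (map_inj_uniq f3_inj) IH.
have A1 : all (fun s => 2 <= gap s) (map incr1 (filter m1 (gen m))).
  apply/allP => s /mapP [[|x t]]; rewrite mem_filter //= => /andP [Hx /gen_sound /and3P [Hp _ _]] ->.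
  by rewrite /gap; have := head_lt Hp Hx; lia.
have A2 : all (fun s => (gap s == 1) && (behead s != [::])) (map f2 (gen m.-1)).
  apply/allP => s /mapP [t /gen_sound /and3P [_ _ Ht] ->] /=.
  by rewrite Ht andbT; apply/eqP; lia.
have A3 : all (fun s => gap s == 0) (map f3 (gen m)).
  by apply/allP => s /mapP [t _ ->] /=; rewrite subnn.
have A0 : all (fun s => (gap s == 1) && (behead s == [::]))
  (if m is 0 then [:: [:: 1]] else [::]) by case: m {IH U1 U2 U3 A1 A2 A3}.
rewrite cat_uniq; apply/and3P; split.
- by case: m {IH U1 U2 U3 A1 A2 A3 A0}.
- rewrite !has_cat !negb_or; apply/and3P; split.
  + apply: (disj_pred A0); apply/allP => s Hs /=; have := allP A1 s Hs; lia.
  + apply: (disj_pred A0); apply/allP => s Hs /=; have := allP A2 s Hs.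
    by case/andP => -> /negbTE ->.
  + apply: (disj_pred A0); apply/allP => s Hs /=; have := allP A3 s Hs; lia.
rewrite cat_uniq U1; apply/and3P; split => //.
- rewrite !has_cat !negb_or; apply/andP; split.
  + apply: (disj_pred A1); apply/allP => s Hs /=; have := allP A2 s Hs; lia.
  + apply: (disj_pred A1); apply/allP => s Hs /=; have := allP A3 s Hs; lia.
rewrite cat_uniq U2 U3 andbT.
apply: (disj_pred A2); apply/allP => s Hs /=; have := allP A3 s Hs.
by move/eqP => ->.
Qed.

Lemma gen_perm n : 0 < n -> perm_eq (gen n) (partitions_perim n).
Proof.
move=> n0; apply: uniq_perm; first exact: gen_uniq.
  by rewrite filter_uniq // uniq_seqs_upto.
move=> s; rewrite mem_filter; apply/idP/idP.
  move=> /gen_sound /and3P [Hp /eqP Hper Hs]; rewrite Hp Hper eqxx /=.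
  case: s Hs Hp Hper => [|x t] // _ Hp Hper.
  rewrite mem_seqs_upto; rewrite perim_cons // in Hper.
  have x0 : 0 < x by move: Hp; rewrite part_cons => /and3P [].
  apply/andP; split; first by rewrite /=; lia.
  rewrite /= (_ : x < n.+1) /=; last by lia.
  apply/allP => y Hy; have := allP (part_all Hp) y Hy; lia.
move=> /andP [/andP [Hp Hper] _]; apply: gen_complete.
rewrite /good Hp Hper /=; apply/eqP => Hs; move: Hper; rewrite Hs /perimeter /=.
by move/eqP => H; rewrite -H in n0.
Qed.


Notation rep2 := n_distinct_rep2.
Notation ev := n_distinct_even.

Lemma rep2_notin x t : x \notin t -> rep2 (x :: t) = rep2 t.
Proof.
move=> Hx; rewrite /n_distinct_rep2 /= (negbTE Hx) /= eqxx.
have -> : count_mem x t = 0 by apply/eqP; rewrite -leqn0 leqNgt -has_count has_pred1.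
rewrite add0n; apply: eq_in_count => y; rewrite mem_undup => Hy /=.
by rewrite (_ : (x == y) = false) //; apply/negbTE; apply: contraNneq Hx => ->.
Qed.

Lemma rep2_in x t : x \in t -> rep2 (x :: t) = rep2 t + (count_mem x t == 1).
Proof.
move=> Hx; rewrite /n_distinct_rep2 /= Hx.
have Hu : x \in undup t by rewrite mem_undup.
rewrite !(permP (perm_to_rem Hu)) /= eqxx rem_filter ?undup_uniq //.
have Hc : 0 < count_mem x t by rewrite -has_count has_pred1.
have -> : count (fun y => 1 < (x == y) + count_mem y t) [seq y <- undup t | predC1 x y]
        = count (fun y => 1 < count_mem y t) [seq y <- undup t | predC1 x y].
  apply: eq_in_count => y; rewrite mem_filter /= => /andP [Hy _].
  by rewrite eq_sym (negbTE Hy).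
have : (1 < (true : nat) + count_mem x t) = true by rewrite add1n ltnS.
move=> ->; move: Hc; case: (count_mem x t) => [|[|c]] // _ /=; by rewrite ?add0n ?addn0 // addnC.
Qed.

Lemma ev_notin x t : x \notin t -> ev (x :: t) = ~~ odd x + ev t.
Proof. by move=> Hx; rewrite /n_distinct_even /= (negbTE Hx). Qed.

Lemma ev_in x t : x \in t -> ev (x :: t) = ev t.
Proof. by move=> Hx; rewrite /n_distinct_even /= Hx. Qed.

Lemma gen_cons k t : t \in gen k -> exists x t', t = x :: t' /\ is_partition (x :: t').
Proof.
case: t => [|x t'] /gen_sound /and3P [Hp _ Hn] //.
by exists x, t'.
Qed.

Lemma notin_big x t : is_partition (x :: t) -> x.+1 \notin t.
Proof.
move=> /part_all H; apply/negP => Hin; have := allP H _ Hin; lia.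
Qed.

Lemma B1f k t : t \in gen k -> m1 t ->
  [/\ m1 (incr1 t), head 0 (incr1 t) = (head 0 t).+1, behead (incr1 t) = behead t,
      rep2 (incr1 t) = rep2 t & ev (incr1 t) = ~~ odd (head 0 t).+1 + ev (behead t)].
Proof.
move=> /gen_cons [x [t' [-> Hp]]] /= Hx; have Hn := notin_big Hp.
by rewrite Hn rep2_notin // rep2_notin // ev_notin.
Qed.

Lemma B2f k t : t \in gen k ->
  [/\ m1 (f2 t), rep2 (f2 t) = rep2 t & ev (f2 t) = ~~ odd (head 0 t).+1 + ev t].
Proof.
move=> /gen_cons [x [t' [-> Hp]]] /=.
have Hn : x.+1 \notin x :: t' by rewrite inE negb_or notin_big // andbT; lia.
by rewrite Hn rep2_notin // ev_notin.
Qed.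

Lemma B3f k t : t \in gen k ->
  [/\ m1 (f3 t) = false, rep2 (f3 t) = rep2 t + m1 t & ev (f3 t) = ev t].
Proof.
move=> /gen_cons [x [t' [-> Hp]]] /=.
rewrite inE eqxx /= rep2_in ?inE ?eqxx // ev_in ?inE ?eqxx //; split => //.
congr (_ + _); rewrite /= eqxx add1n eqSS.
by rewrite -leqn0 leqNgt -has_count has_pred1.
Qed.

Lemma m1_ev k t : t \in gen k -> m1 t -> ev t = ~~ odd (head 0 t) + ev (behead t).
Proof. by move=> /gen_cons [x [t' [-> Hp]]] /= Hx; rewrite ev_notin. Qed.

Import GRing.Theory.
Local Open Scope ring_scope.

Lemma big_gen_eq (R : nmodType) (l : seq (seq nat)) (P1 P2 : pred (seq nat))
   (F1 F2 : seq nat -> R) :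
  (forall s, s \in l -> P1 s = P2 s) -> (forall s, s \in l -> P2 s -> F1 s = F2 s) ->
  \sum_(s <- l | P1 s) F1 s = \sum_(s <- l | P2 s) F2 s.
Proof.
move=> H1 H2; rewrite big_seq_cond [RHS]big_seq_cond; apply: eq_big => s.
  by case: (boolP (s \in l)) => // H; rewrite H1.
by case/andP => H Hp; apply: H2 => //; rewrite -H1.
Qed.

Lemma blocks (R : nmodType) (P : pred (seq nat)) (F : seq nat -> R) m :
  \sum_(s <- gen m.+1 | P s) F s =
    (if m is 0 then (if P [:: 1%N] then F [:: 1%N] else 0) else 0)
  + \sum_(t <- gen m | m1 t && P (incr1 t)) F (incr1 t)
  + \sum_(t <- gen m.-1 | P (f2 t)) F (f2 t)
  + \sum_(t <- gen m | P (f3 t)) F (f3 t).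
Proof.
rewrite genS !big_cat !big_map big_filter_cond -!addrA /=; congr (_ + (_ + (_ + _))).
by case: m => [|m] /=; rewrite ?big_nil // big_cons big_nil; case: (P _); rewrite ?addr0.
Qed.

Definition U n : {poly int} := \sum_(s <- gen n | m1 s) 'X^(rep2 s).
Definition V n : {poly int} := \sum_(s <- gen n | ~~ m1 s) 'X^(rep2 s).

Lemma U_rec m : U m.+1 = (m == 0%N)%:R + U m + (U m.-1 + V m.-1).
Proof.
rewrite {1}/U blocks.
rewrite (@big_gen_eq _ _ (fun t => m1 t && m1 (incr1 t)) m1 _ (fun t => 'X^(rep2 t))); first last.
- by move=> t Ht H; case: (B1f Ht H) => _ _ _ ->.
- by move=> t Ht; case H: (m1 t) => //; case: (B1f Ht H) => ->.
rewrite (@big_gen_eq _ _ (fun t => m1 (f2 t)) predT _ (fun t => 'X^(rep2 t))); first last.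
- by move=> t Ht _; case: (B2f Ht) => _ ->.
- by move=> t Ht; case: (B2f Ht) => ->.
rewrite (@big_gen_eq _ _ (fun t => m1 (f3 t)) pred0 _ (fun t => 'X^(rep2 t))); first last.
- by [].
- by move=> t Ht; case: (B3f Ht) => ->.
rewrite big_pred0_eq addr0 -/(U m) (bigID m1) /=; congr (_ + _ + _).
by case: m => [|m] //=; rewrite expr0.
Qed.

Lemma V_rec m : V m.+1 = V m + 'X * U m.
Proof.
rewrite {1}/V blocks.
rewrite (@big_gen_eq _ _ (fun t => m1 t && ~~ m1 (incr1 t)) pred0 _ (fun t => 'X^(rep2 t))); first last.
- by [].
- by move=> t Ht; case H: (m1 t) => //=; case: (B1f Ht H) => ->.
rewrite (@big_gen_eq _ _ (fun t => ~~ m1 (f2 t)) pred0 _ (fun t => 'X^(rep2 t))); first last.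
- by [].
- by move=> t Ht; case: (B2f Ht) => ->.
rewrite (@big_gen_eq _ _ (fun t => ~~ m1 (f3 t)) predT _ (fun t => 'X^(rep2 t + m1 t))); first last.
- by move=> t Ht _; case: (B3f Ht) => _ ->.
- by move=> t Ht; case: (B3f Ht) => ->.
rewrite !big_pred0_eq addr0 (bigID m1) /= big_distrr /=.
have -> : (match m with 0%N | _ => 0 end : {poly int}) = 0 by case: m.
rewrite !add0r addrC; congr (_ + _).
  by rewrite /V; apply: eq_bigr => t /negbTE ->; rewrite addn0.
by apply: eq_bigr => t ->; rewrite addn1 exprS.
Qed.

Definition Te n : {poly int} := \sum_(s <- gen n | ~~ odd (head 0%N s)) 'X^(ev s).
Definition To n : {poly int} := \sum_(s <- gen n | odd (head 0%N s)) 'X^(ev s).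
Definition Ye n : {poly int} :=
  \sum_(s <- gen n | m1 s && ~~ odd (head 0%N s)) 'X^(ev (behead s)).
Definition Yo n : {poly int} :=
  \sum_(s <- gen n | m1 s && odd (head 0%N s)) 'X^(ev (behead s)).

Lemma Te_rec m : Te m.+1 = 'X * Yo m + 'X * To m.-1 + Te m.
Proof.
rewrite {1}/Te blocks.
rewrite (@big_gen_eq _ _ (fun t => m1 t && ~~ odd (head 0%N (incr1 t)))
   (fun t => m1 t && odd (head 0%N t)) _ (fun t => 'X * 'X^(ev (behead t)))); first last.
- move=> t Ht /andP [H Ho]; case: (B1f Ht H) => _ _ _ _ ->.
  by rewrite /= negbK Ho add1n exprS.
- by move=> t Ht; case H: (m1 t) => //=; case: (B1f Ht H) => _ -> /=; rewrite negbK.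
rewrite (@big_gen_eq _ _ (fun t => ~~ odd (head 0%N (f2 t)))
   (fun t => odd (head 0%N t)) _ (fun t => 'X * 'X^(ev t))); first last.
- by move=> t Ht Ho; case: (B2f Ht) => _ _ ->; rewrite /= negbK Ho add1n exprS.
- by move=> t Ht /=; rewrite negbK.
rewrite (@big_gen_eq _ _ (fun t => ~~ odd (head 0%N (f3 t)))
   (fun t => ~~ odd (head 0%N t)) _ (fun t => 'X^(ev t))); first last.
- by move=> t Ht _; case: (B3f Ht) => _ _ ->.
- by [].
rewrite -!big_distrr /= -/(Te m) -/(To m.-1) -/(Yo m).
by case: m => [|m] /=; rewrite add0r.
Qed.

Lemma To_rec m : To m.+1 = (m == 0%N)%:R + Ye m + Te m.-1 + To m.
Proof.
rewrite {1}/To blocks.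
rewrite (@big_gen_eq _ _ (fun t => m1 t && odd (head 0%N (incr1 t)))
   (fun t => m1 t && ~~ odd (head 0%N t)) _ (fun t => 'X^(ev (behead t)))); first last.
- move=> t Ht /andP [H Ho]; case: (B1f Ht H) => _ _ _ _ ->.
  by rewrite /= (negbTE Ho) add0n.
- by move=> t Ht; case H: (m1 t) => //=; case: (B1f Ht H) => _ -> /=.
rewrite (@big_gen_eq _ _ (fun t => odd (head 0%N (f2 t)))
   (fun t => ~~ odd (head 0%N t)) _ (fun t => 'X^(ev t))); first last.
- by move=> t Ht Ho; case: (B2f Ht) => _ _ ->; rewrite /= (negbTE Ho) add0n.
- by [].
rewrite (@big_gen_eq _ _ (fun t => odd (head 0%N (f3 t)))
   (fun t => odd (head 0%N t)) _ (fun t => 'X^(ev t))); first last.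
- by move=> t Ht _; case: (B3f Ht) => _ _ ->.
- by [].
rewrite -/(Te m.-1) -/(To m) -/(Ye m).
by case: m => [|m] /=; rewrite ?expr0.
Qed.

Lemma Ye_rec m : Ye m.+1 = Yo m + To m.-1.
Proof.
rewrite {1}/Ye blocks.
rewrite (@big_gen_eq _ _ (fun t => m1 t && (m1 (incr1 t) && ~~ odd (head 0%N (incr1 t))))
   (fun t => m1 t && odd (head 0%N t)) _ (fun t => 'X^(ev (behead t)))); first last.
- by move=> t Ht /andP [H Ho]; case: (B1f Ht H) => _ _ ->.
- by move=> t Ht; case H: (m1 t) => //=; case: (B1f Ht H) => -> -> /=; rewrite negbK.
rewrite (@big_gen_eq _ _ (fun t => m1 (f2 t) && ~~ odd (head 0%N (f2 t)))
   (fun t => odd (head 0%N t)) _ (fun t => 'X^(ev t))); first last.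
- by [].
- by move=> t Ht; case: (B2f Ht) => -> _ _ /=; rewrite negbK.
rewrite (@big_gen_eq _ _ (fun t => m1 (f3 t) && ~~ odd (head 0%N (f3 t)))
   pred0 _ (fun t => 'X^(ev t))); first last.
- by [].
- by move=> t Ht; case: (B3f Ht) => ->.
rewrite big_pred0_eq addr0 -/(To m.-1) -/(Yo m).
by case: m => [|m] /=; rewrite add0r.
Qed.

Lemma Yo_rec m : Yo m.+1 = (m == 0%N)%:R + Ye m + Te m.-1.
Proof.
rewrite {1}/Yo blocks.
rewrite (@big_gen_eq _ _ (fun t => m1 t && (m1 (incr1 t) && odd (head 0%N (incr1 t))))
   (fun t => m1 t && ~~ odd (head 0%N t)) _ (fun t => 'X^(ev (behead t)))); first last.
- by move=> t Ht /andP [H Ho]; case: (B1f Ht H) => _ _ ->.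
- by move=> t Ht; case H: (m1 t) => //=; case: (B1f Ht H) => -> -> /=.
rewrite (@big_gen_eq _ _ (fun t => m1 (f2 t) && odd (head 0%N (f2 t)))
   (fun t => ~~ odd (head 0%N t)) _ (fun t => 'X^(ev t))); first last.
- by [].
- by move=> t Ht; case: (B2f Ht) => -> _ _ /=.
rewrite (@big_gen_eq _ _ (fun t => m1 (f3 t) && odd (head 0%N (f3 t)))
   pred0 _ (fun t => 'X^(ev t))); first last.
- by [].
- by move=> t Ht; case: (B3f Ht) => ->.
rewrite big_pred0_eq addr0 -/(Te m.-1) -/(Ye m).
by case: m => [|m] /=; rewrite ?expr0.
Qed.

Import GRing.Theory.
Local Open Scope ring_scope.

Definition Nz (R : nzRingType) (z : R) (n : nat) : R :=
  (n == 1%N)%:R + (n == 2%N)%:R * (z - 1).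

Lemma elimFD (R : comNzRingType) (z : R) (U V : nat -> R) :
  U 0%N = 0 -> V 0%N = 0 ->
  (forall m, U m.+1 = (m == 0%N)%:R + U m + (U m.-1 + V m.-1)) ->
  (forall m, V m.+1 = V m + z * U m) ->
  forall n, (U n + V n) - 2%:R * (U (n - 1)%N + V (n - 1)%N)
            + (1 - z) * (U (n - 3)%N + V (n - 3)%N) = Nz z n.
Proof.
move=> U0 V0 hU hV n.
have -> : (n - 3 = n.-1.-1.-1)%N by case: n => [|[|[|[|n]]]] //=; rewrite subn1.
rewrite subn1.
case: n => [|[|[|[|k]]]] /=.
- by rewrite U0 V0 /Nz /=; ring.
- by rewrite (hU 0%N) (hV 0%N) U0 V0 /Nz /=; ring.
- by rewrite (hU 1%N) (hV 1%N) (hU 0%N) (hV 0%N) U0 V0 /Nz /=; ring.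
- by rewrite (hU 2%N) (hV 2%N) (hU 1%N) (hV 1%N) (hU 0%N) (hV 0%N) U0 V0 /Nz /=; ring.
rewrite (hU k.+3) (hV k.+3) (hU k.+2) (hV k.+2) (hU k.+1) (hV k.+1) /Nz /=; ring.
Qed.

Lemma elimFO (R : comNzRingType) (z : R) (Te To Ye Yo : nat -> R) :
  Te 0%N = 0 -> To 0%N = 0 -> Ye 0%N = 0 -> Yo 0%N = 0 ->
  (forall m, Te m.+1 = z * Yo m + z * To m.-1 + Te m) ->
  (forall m, To m.+1 = (m == 0%N)%:R + Ye m + Te m.-1 + To m) ->
  (forall m, Ye m.+1 = Yo m + To m.-1) ->
  (forall m, Yo m.+1 = (m == 0%N)%:R + Ye m + Te m.-1) ->
  forall n, (Te n + To n) - 2%:R * (Te (n - 1)%N + To (n - 1)%N)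
            + (1 - z) * (Te (n - 3)%N + To (n - 3)%N) = Nz z n.
Proof.
move=> E0 O0 YE0 YO0 hE hO hYE hYO n.
have -> : (n - 3 = n.-1.-1.-1)%N by case: n => [|[|[|[|n]]]] //=; rewrite subn1.
rewrite subn1.
case: n => [|[|[|[|k]]]] /=.
- by rewrite E0 O0 /Nz /=; ring.
- by rewrite (hE 0%N) (hO 0%N) E0 O0 YE0 YO0 /Nz /=; ring.
- by rewrite (hE 1%N) (hO 1%N) (hYE 0%N) (hYO 0%N) (hE 0%N) (hO 0%N) E0 O0 YE0 YO0 /Nz /=; ring.
- rewrite (hE 2%N) (hO 2%N) (hYE 1%N) (hYO 1%N) (hE 1%N) (hO 1%N).
  by rewrite (hYE 0%N) (hYO 0%N) (hE 0%N) (hO 0%N) E0 O0 YE0 YO0 /Nz /=; ring.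
rewrite (hE k.+3) (hO k.+3) (hYE k.+2) (hYO k.+2) (hE k.+2) (hO k.+2).
rewrite (hYE k.+1) (hYO k.+1) (hE k.+1) (hO k.+1) (hYE k) (hYO k) (hE k) (hO k) /Nz /=; ring.
Qed.

Import GRing.Theory.
Local Open Scope ring_scope.

Lemma coef_count (l : seq (seq nat)) (f : seq nat -> nat) j :
  (\sum_(s <- l) 'X^(f s) : {poly int})`_j = (count (fun s => f s == j) l)%:Z.
Proof.
elim: l => [|s l IH]; first by rewrite big_nil coef0.
rewrite big_cons coefD IH coefXn /= [j == _]eq_sym PoszD; by case: (f s == j).
Qed.

Lemma sum_trunc (R : nmodType) (F : nat -> R) m N : (N <= m)%N ->
  (forall k, (N <= k)%N -> F k = 0) -> \sum_(k < m) F k = \sum_(k < N) F k.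
Proof.
move=> Hle H; rewrite -(subnKC Hle) big_split_ord /= [X in _ + X]big1 ?addr0 // => i _.
by apply: H; exact: leq_addr.
Qed.

Lemma inner (b c : nat -> int) j : (forall i, b i.+2 = 0) ->
  \sum_(i < j.+1) b i * c (j - i)%N = b 0%N * c j + (if j is j'.+1 then b 1%N * c j' else 0).
Proof.
move=> Hb; case: j => [|j].
  by rewrite big_ord_recl big_ord0 /= subn0 !addr0.
rewrite (@sum_trunc _ (fun i => b i * c (j.+1 - i)%N) _ 2) //.
  by rewrite !big_ord_recl big_ord0 /= subn0 subSS subn0 addr0.
by move=> [|[|k]] // _; rewrite Hb mul0r.
Qed.

Lemma denom_hi k i : (4 <= k)%N -> denom_coef k i = 0.
Proof. by case: k => [|[|[|[|k]]]] //; case: i. Qed.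

Lemma denom_hi2 k i : denom_coef k i.+2 = 0.
Proof. by case: k => [|[|[|[|k]]]]. Qed.

Lemma numer_Nz n j : (Nz 'X n : {poly int})`_j = numer_coef n j.
Proof.
rewrite /Nz coefD coefMn.
case: n => [|[|[|n]]] /=; rewrite ?mul0r ?mul1r ?coef0 ?addr0 ?add0r ?coef1 ?coefB ?coefX ?coef1.
- by case: j.
- by case: j => [|[|j]].
- by case: j => [|[|j]].
- by case: j => [|[|j]].
Qed.

Lemma gf_from_poly (a : nat -> nat -> int) (P : nat -> {poly int}) :
  (forall n j, a n j = (P n)`_j) -> (forall j, a 0%N j = 0) ->
  (forall n, P n - 2%:R * P (n - 1)%N + (1 - 'X) * P (n - 3)%N = Nz 'X n) ->
  gf_identity a.
Proof.
move=> Ha Ha0 HP n j.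
set G := fun k : nat => \sum_(i < j.+1) denom_coef k i * a (n - k)%N (j - i)%N.
have -> : \sum_(k < n.+1) \sum_(i < j.+1) denom_coef k i * a (n - k)%N (j - i)%N
          = \sum_(k < n.+1) G k by [].
rewrite -(@sum_trunc _ G (maxn n.+1 4) n.+1 (leq_maxl _ _)); last first.
  move=> k Hk; rewrite /G big1 // => i _.
  by rewrite (_ : (n - k = 0)%N) ?Ha0 ?mulr0 //; lia.
rewrite (@sum_trunc _ G (maxn n.+1 4) 4 (leq_maxr _ _)); last first.
  by move=> k Hk; rewrite /G big1 // => i _; rewrite denom_hi // mul0r.
rewrite !big_ord_recl big_ord0 /= /G.
rewrite !(inner _ _ (denom_hi2 _)) /=.
rewrite -numer_Nz -HP !Ha.
rewrite /bump /= subn0 mulrBl !mul1r coefD !coefB coefXM !addn0 !add1n mulr_natl coefMn.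
by clear G; case: j => [|j] /=; rewrite ?Ha; ring.
Qed.

Import GRing.Theory.
Local Open Scope ring_scope.

Lemma UV_sum n : U n + V n = \sum_(s <- gen n) 'X^(rep2 s).
Proof. by rewrite (bigID m1). Qed.

Lemma TeTo_sum n : Te n + To n = \sum_(s <- gen n) 'X^(ev s).
Proof. by rewrite (bigID (fun s => odd (head 0%N s))) addrC. Qed.

Lemma count_gen (f : seq nat -> nat) n j : (0 < n)%N ->
  count (fun s => f s == j) (partitions_perim n) = count (fun s => f s == j) (gen n).
Proof. by move=> n0; rewrite (permP (gen_perm n0)). Qed.

Lemma U0 : U 0 = 0. Proof. by rewrite /U big_nil. Qed.
Lemma V0 : V 0 = 0. Proof. by rewrite /V big_nil. Qed.
Lemma Te0 : Te 0 = 0. Proof. by rewrite /Te big_nil. Qed.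
Lemma To0 : To 0 = 0. Proof. by rewrite /To big_nil. Qed.
Lemma Ye0 : Ye 0 = 0. Proof. by rewrite /Ye big_nil. Qed.
Lemma Yo0 : Yo 0 = 0. Proof. by rewrite /Yo big_nil. Qed.

Theorem mainTheorem4 :
  gf_identity (coef_array FD2) /\ gf_identity (coef_array FO2).
Proof.
split.
- apply: (@gf_from_poly _ (fun n => U n + V n)) => //.
  + move=> [|n] j; first by rewrite /U /V /= !big_nil addr0 coef0.
    by rewrite /= /FD2 count_gen // UV_sum coef_count.
  + exact: (@elimFD _ 'X U V U0 V0 U_rec V_rec).
- apply: (@gf_from_poly _ (fun n => Te n + To n)) => //.
  + move=> [|n] j; first by rewrite /Te /To /= !big_nil addr0 coef0.
    by rewrite /= /FO2 count_gen // TeTo_sum coef_count.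
  + exact: (@elimFO _ 'X Te To Ye Yo Te0 To0 Ye0 Yo0 Te_rec To_rec Ye_rec Yo_rec).
Qed.
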